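(* Let $\beta>0$ and $N\in\mathbb{N}$. Define $W:[0,\infty)\to\mathbb{R}$ by $W(y)=\log(4y^2+1)-y\arctan(2y)$ and, for real $t$, $$P_{N,\beta}(t)=\prod_{j=1}^{N-1}\prod_{k=1}^{\lfloor j\beta/2\rfloor}\frac{\big(1+it+\frac{j\beta}{2}-k\big)\big(1+\frac{j\beta}{2}-k\big)}{\big(1+\frac{it}{2}+\frac{j\beta}{2}-k\big)^2},$$ where an empty product equals $1$. Let $c_3=\frac{\beta/8-1}{2N}+\frac38\beta+\frac32$. Then for $|t|\geq(N-1)\beta/2$, $$|P_{N,\beta}(t)|^2\leq\exp\Big(-\frac{1}{2\beta}t^2\,W\Big(\frac{N\beta}{2|t|}\Big)\Big)\exp(2c_3N).$$
   Context: $\lfloor x\rfloor$ denotes the integer part of $x$. *)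

(* Defs.v *)
From Stdlib Require Import Reals ZArith.
From Coquelicot Require Import Coquelicot.
Open Scope R_scope.

(* floor of a real, as an integer: Int_part x = up x - 1 = floor x *)
Definition floorR (x : R) : Z := Int_part x.

Definition W (y : R) : R := ln (4 * y ^ 2 + 1) - y * atan (2 * y).

Fixpoint prodC (n : nat) (f : nat -> C) : C :=
  match n with
  | O => 1%C
  | S m => Cmult (prodC m f) (f (S m))
  end.

Definition Pfactor (beta t : R) (j k : nat) : C :=
  let a : R := 1 + INR j * beta / 2 - INR k in
  let h : R := t / 2 in
  Cdiv (Cmult (Cplus (RtoC a) (0, t)) (RtoC a))
       (Cmult (Cplus (RtoC a) (0, h)) (Cplus (RtoC a) (0, h))).

Definition P (N : nat) (beta t : R) : C :=
  prodC (N - 1)%nat (fun j =>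
    prodC (Z.to_nat (floorR (INR j * beta / 2))) (fun k => Pfactor beta t j k)).

Definition c3 (N : nat) (beta : R) : R :=
  (beta / 8 - 1) / (2 * INR N) + 3 / 8 * beta + 3 / 2.

(* Main.v *)
Require Import Defs.
From Stdlib Require Import Reals ZArith Lra Lia Psatz.
From Coquelicot Require Import Coquelicot.
Open Scope R_scope.

Lemma deriv_cont (f df : R -> R) :
  (forall x, is_derive f x (df x)) -> forall x, continuity_pt f x.
Proof.
  intros H x. apply derivable_continuous_pt.
  exists (df x). apply is_derive_Reals. apply H.
Qed.

Lemma mvt (f df : R -> R) (a b : R) :
  (forall x, is_derive f x (df x)) -> a <= b ->
  exists c, a <= c <= b /\ f b - f a = df c * (b - a).
Proof.
  intros H Hab.
  destruct (MVT_gen f a b df) as [c [Hc E]].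
  - intros; apply H.
  - intros; apply (deriv_cont f df H).
  - exists c. rewrite Rmin_left, Rmax_right in Hc by lra. auto.
Qed.

Definition psi (T x : R) := T^2*(8*x^2 - T^2)/(T^2+4*x^2)^2.
Definition dpsi (T x : R) := 32*x*T^2*(T^2-2*x^2)/(T^2+4*x^2)^3.
Definition Psi1 (T x : R) := T/4 * atan (2*x/T) - 3/2*x*T^2/(4*x^2+T^2).
Definition Psi2 (T x : R) := -(T^2/4) * W (x/T).

Lemma d_psi T x : 0 < T -> is_derive (psi T) x (dpsi T x).
Proof.
  intros HT. unfold psi, dpsi.
  assert (0 < T^2+4*x^2) by nra.
  auto_derive. { nra. }
  field. nra.
Qed.

Lemma d_Psi1 T x : 0 < T -> is_derive (Psi1 T) x (psi T x).
Proof.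
  intros HT. unfold psi, Psi1.
  assert (0 < T^2+4*x^2) by nra.
  auto_derive. { nra. }
  field. split; [|lra]. 
  lra.
Qed.

Lemma d_Psi2 T x : 0 < T -> is_derive (Psi2 T) x (Psi1 T x).
Proof.
  intros HT. unfold Psi2, Psi1, W.
  assert (0 < T^2+4*x^2) by nra.
  assert (0 <= (x*/T)^2) by nra.
  auto_derive. { nra. }
  replace (2*x/T) with (2*(x*/T)) by (unfold Rdiv; ring).
  set (A := atan (2*(x*/T))).
  field. repeat split; try lra; try nra.
Qed.

Lemma div_le a b c : 0 < c -> a <= b*c -> a/c <= b.
Proof. intros. replace b with (b*c/c) by (field; lra). unfold Rdiv.
  apply Rmult_le_compat_r; [left; apply Rinv_0_lt_compat; lra| lra]. Qed.
Lemma le_div a b c : 0 < c -> a*c <= b -> a <= b/c.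
Proof. intros. replace a with (a*c/c) by (field; lra). unfold Rdiv.
  apply Rmult_le_compat_r; [left; apply Rinv_0_lt_compat; lra| lra]. Qed.

Lemma p1 y : 8*y*(1-2*y^2) <= (1+4*y^2)^3.
Proof. assert (h1:=pow2_ge_0 (y-1/4)). assert (h2:=pow2_ge_0 (y^2)).
  assert (h3 := pow2_ge_0 (2*y^2-y)). assert (h4 := pow2_ge_0 (2*y^2+y)). nra. Qed.

Lemma psi_bnd T x : 0 < T -> -1 <= psi T x <= 1.
Proof.
  intros HT. unfold psi.
  assert (HD : 0 < (T^2+4*x^2)^2) by (apply pow_lt; nra).
  split.
  - apply le_div; [lra|]. assert (h:=pow2_ge_0 (x^2)). assert (h':=pow2_ge_0 (x*T)). nra.
  - apply div_le; [lra|]. assert (h:=pow2_ge_0 (x^2)). assert (h':=pow2_ge_0 (T^2)). nra.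
Qed.

Lemma dpsi_bnd T x : 0 < T -> Rabs (dpsi T x) <= 4/T.
Proof.
  intros HT. set (y := x/T).
  assert (HD : 0 < (1+4*y^2)^3) by (apply pow_lt; nra).
  replace (dpsi T x) with (4/T * (8*y*(1-2*y^2)/(1+4*y^2)^3)).
  2:{ unfold dpsi, y. field. split; [|lra]. nra. }
  rewrite Rabs_mult. rewrite (Rabs_right (4/T)).
  2:{ apply Rle_ge. apply le_div; lra. }
  rewrite <- (Rmult_1_r (4/T)) at 2. apply Rmult_le_compat_l.
  { apply le_div; lra. }
  apply Rabs_le. split.
  - apply le_div; [lra|]. assert (h := p1 (-y)). 
    replace ((-y)^2) with (y^2) in h by ring. nra.
  - apply div_le; [lra|]. assert (h := p1 y). nra.
Qed.

Lemma Psi1_0 T : Psi1 T 0 = 0.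
Proof. unfold Psi1. replace (2*0/T) with 0 by (unfold Rdiv; ring). rewrite atan_0. unfold Rdiv. ring. Qed.

Lemma Psi2_0 T : Psi2 T 0 = 0.
Proof. unfold Psi2, W. replace (0/T) with 0 by (unfold Rdiv; ring).
  replace (4*0^2+1) with 1 by ring. rewrite ln_1. ring. Qed.

Lemma Psi1_lip T a b : 0 < T -> Rabs (Psi1 T b - Psi1 T a) <= Rabs (b - a).
Proof.
  intros HT.
  assert (K : forall a b, a <= b -> Rabs (Psi1 T b - Psi1 T a) <= Rabs (b - a)).
  { clear a b. intros a b Hab.
    destruct (mvt (Psi1 T) (psi T) a b (fun x => d_Psi1 T x HT) Hab) as [c [Hc E]].
    rewrite E. rewrite Rabs_mult. rewrite <- (Rmult_1_l (Rabs (b-a))) at 2.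
    apply Rmult_le_compat_r; [apply Rabs_pos|]. apply Rabs_le. apply psi_bnd; auto. }
  destruct (Rle_dec a b). { apply K; auto. }
  rewrite Rabs_minus_sym. rewrite (Rabs_minus_sym b a). apply K. lra.
Qed.

Lemma Psi1_lower T x : 0 < T -> 0 <= x -> -x <= Psi1 T x.
Proof.
  intros HT Hx. assert (h := Psi1_lip T 0 x HT). rewrite Psi1_0 in h.
  rewrite Rminus_0_r, Rminus_0_r in h. rewrite (Rabs_right x) in h by lra.
  assert (h2 := Rle_abs (- Psi1 T x)). rewrite Rabs_Ropp in h2. lra.
Qed.

Lemma term1 T x : 0 < T -> psi T x <= Psi1 T x - Psi1 T (x-1) + 4/T.
Proof.
  intros HT.
  destruct (mvt (Psi1 T) (psi T) (x-1) x (fun z => d_Psi1 T z HT)) as [c [Hc E]]; [lra|].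
  destruct (mvt (psi T) (dpsi T) c x (fun z => d_psi T z HT)) as [d [Hd E2]]; [lra|].
  assert (h := dpsi_bnd T d HT). assert (h2 := Rle_abs (dpsi T d)).
  replace (x - (x-1)) with 1 in E by ring.
  assert (dpsi T d * (x - c) <= 4/T * 1).
  { apply Rle_trans with (Rabs (dpsi T d) * (x-c)).
    - apply Rmult_le_compat_r; lra.
    - apply Rmult_le_compat; try lra. apply Rabs_pos. }
  lra.
Qed.

Lemma term2 T h x : 0 < T -> 0 < h ->
  h * Psi1 T x <= Psi2 T (x+h/2) - Psi2 T (x-h/2) + h^2/2.
Proof.
  intros HT Hh.
  destruct (mvt (Psi2 T) (Psi1 T) (x-h/2) (x+h/2) (fun z => d_Psi2 T z HT)) as [c [Hc E]]; [lra|].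
  replace (x + h/2 - (x - h/2)) with h in E by field.
  assert (L := Psi1_lip T c x HT).
  assert (L2 := Rle_abs (Psi1 T x - Psi1 T c)).
  assert (Rabs (x - c) <= h/2) by (apply Rabs_le; lra).
  nra.
Qed.

Lemma Psi2_step T a b : 0 < T -> 0 <= a <= b -> Psi2 T a <= Psi2 T b + b*(b-a).
Proof.
  intros HT Hab.
  destruct (mvt (Psi2 T) (Psi1 T) a b (fun z => d_Psi2 T z HT)) as [c [Hc E]]; [lra|].
  assert (h := Psi1_lower T c HT ltac:(lra)). nra.
Qed.

Fixpoint sumR (n : nat) (f : nat -> R) : R :=
  match n with O => 0 | S m => sumR m f + f (S m) end.

Lemma prod_bound n f g :
  (forall k, (1 <= k <= n)%nat -> Cmod (f k) ^ 2 <= exp (g k)) ->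
  Cmod (prodC n f) ^ 2 <= exp (sumR n g).
Proof.
  induction n as [|n IH]; intros H.
  - simpl. rewrite Cmod_1, exp_0. lra.
  - simpl prodC; simpl sumR. rewrite Cmod_mult, Rpow_mult_distr, exp_plus.
    apply Rmult_le_compat.
    + apply pow2_ge_0.
    + apply pow2_ge_0.
    + apply IH. intros k Hk. apply H. lia.
    + apply H. lia.
Qed.

Lemma level1 T c m : 0 < T ->
  sumR m (fun k => psi T (c - INR k)) <= Psi1 T (c-1) - Psi1 T (c-1-INR m) + 4*INR m/T.
Proof.
  intros HT. induction m as [|m IH].
  - simpl. replace (c-1-0) with (c-1) by ring. unfold Rdiv. lra.
  - cbn [sumR]. rewrite S_INR.
    assert (h := term1 T (c - (INR m + 1)) HT).
    replace (c - (INR m + 1)) with (c - 1 - INR m) in h by ring.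
    replace (c - 1 - INR m - 1) with (c - 1 - (INR m + 1)) in h by ring.
    replace (c - (INR m + 1)) with (c - 1 - INR m) by ring.
    replace (4 * (INR m + 1) / T) with (4 * INR m / T + 4/T) by (field; lra).
    lra.
Qed.

Lemma Cmod_sq (z : C) : Cmod z ^ 2 = fst z ^ 2 + snd z ^ 2.
Proof. unfold Cmod. apply pow2_sqrt. assert (h1:=pow2_ge_0 (fst z)). assert (h2:=pow2_ge_0 (snd z)). lra. Qed.

Lemma factor_eq beta t j k :
  0 < 1 + INR j * beta / 2 - INR k ->
  Cmod (Pfactor beta t j k) ^ 2 = 1 + psi (Rabs t) (1 + INR j * beta / 2 - INR k).
Proof.
  intros Ha. unfold Pfactor. set (a := 1 + INR j * beta / 2 - INR k) in *.
  assert (Hd : Cmult (Cplus (RtoC a) (0, t/2)) (Cplus (RtoC a) (0, t/2)) <> 0%C).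
  { intro E. assert (h := f_equal Cmod E). rewrite Cmod_0, Cmod_mult in h.
    assert (h2 : Cmod (Cplus (RtoC a) (0, t/2)) ^ 2 = a^2 + (t/2)^2).
    { rewrite Cmod_sq. simpl. ring. }
    assert (h3 : Cmod (Cplus (RtoC a) (0, t/2)) ^ 2 = 0) by (simpl; nra).
    assert (h4 := pow2_ge_0 (t/2)). nra. }
  rewrite Cmod_div by exact Hd. rewrite !Cmod_mult.
  unfold Rdiv. rewrite Rpow_mult_distr, pow_inv, !Rpow_mult_distr, !Cmod_sq.
  simpl fst; simpl snd. unfold psi. rewrite <- (Rsqr_pow2 (Rabs t)), <- Rsqr_abs, Rsqr_pow2.
  assert (0 < a^2) by nra.
  field. nra.
Qed.

Lemma sumR_le n f g : (forall k, (1 <= k <= n)%nat -> f k <= g k) -> sumR n f <= sumR n g.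
Proof.
  induction n as [|n IH]; intros H; simpl.
  - lra.
  - apply Rplus_le_compat. apply IH; intros; apply H; lia. apply H; lia.
Qed.

Lemma floor_facts s : 0 <= s ->
  INR (Z.to_nat (floorR s)) <= s /\ s < INR (Z.to_nat (floorR s)) + 1.
Proof.
  intros Hs. unfold floorR. destruct (base_Int_part s) as [h1 h2].
  assert (Hz : (0 <= Int_part s)%Z).
  { assert (-1 < IZR (Int_part s)) by lra.
    apply lt_IZR in H. lia. }
  rewrite INR_IZR_INZ, Z2Nat.id by exact Hz. lra.
Qed.

Lemma inner_bound T s : 0 < T -> 0 <= s ->
  sumR (Z.to_nat (floorR s)) (fun k => psi T (1 + s - INR k)) <= Psi1 T s + 1 + 4*s/T.
Proof.
  intros HT Hs. destruct (floor_facts s Hs) as [f1 f2].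
  set (m := Z.to_nat (floorR s)) in *.
  assert (h := level1 T (1+s) m HT).
  replace (1 + s - 1) with s in h by ring.
  assert (h2 := Psi1_lower T (s - INR m) HT ltac:(lra)).
  assert (4 * INR m / T <= 4 * s / T).
  { unfold Rdiv. apply Rmult_le_compat_r. left; apply Rinv_0_lt_compat; lra. lra. }
  replace (1 + s - 1 - INR m) with (s - INR m) in h by ring.
  lra.
Qed.

Lemma L2a T h n : 0 < T -> 0 < h ->
  h * sumR n (fun j => Psi1 T (INR j * h)) <=
  Psi2 T (INR n * h + h/2) - Psi2 T (h/2) + INR n * h^2/2.
Proof.
  intros HT Hh. induction n as [|n IH].
  - simpl. replace (0*h + h/2) with (h/2) by ring. lra.
  - cbn [sumR]. rewrite S_INR.
    assert (t2 := term2 T h ((INR n + 1) * h) HT Hh).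
    replace ((INR n + 1) * h - h/2) with (INR n * h + h/2) in t2 by field.
    replace ((INR n + 1) * h + h/2) with ((INR n + 1) * h + h/2) by ring.
    rewrite Rmult_plus_distr_l. nra.
Qed.

Lemma L2b T h n : 0 < T ->
  sumR n (fun j => Psi1 T (INR j * h) + 1 + 4 * (INR j * h) / T) =
  sumR n (fun j => Psi1 T (INR j * h)) + INR n + 2 * h * INR n * (INR n + 1) / T.
Proof.
  intros HT. induction n as [|n IH].
  - simpl. field. lra.
  - cbn [sumR]. rewrite IH, S_INR. field. lra.
Qed.

Lemma exp_le_exp x y : x <= y -> exp x <= exp y.
Proof. intros [H|H]. left; apply exp_increasing; auto. subst; lra. Qed.

Theorem lemma3p5 (beta : R) (N : nat) (t : R) :
  0 < beta ->
  INR (N - 1) * beta / 2 <= Rabs t ->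
  (Cmod (P N beta t)) ^ 2 <=
    exp (- (1 / (2 * beta)) * t ^ 2 * W (INR N * beta / (2 * Rabs t)))
    * exp (2 * c3 N beta * INR N).
Proof.
  intros Hb Ht.
  destruct (Req_dec t 0) as [Ht0|Ht0].
  - subst t. rewrite Rabs_R0 in Ht.
    assert (HN : (N - 1 = 0)%nat).
    { destruct (N - 1)%nat as [|p] eqn:E; auto.
      assert (0 < INR (S p)) by (apply lt_0_INR; lia). nra. }
    unfold P. rewrite HN. simpl prodC. rewrite Cmod_1.
    replace (- (1 / (2 * beta)) * 0 ^ 2 * W (INR N * beta / (2 * Rabs 0))) with 0 by ring.
    rewrite exp_0. replace (1 ^ 2) with 1 by ring. rewrite Rmult_1_l.
    rewrite <- exp_0 at 1. apply exp_le_exp.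
    destruct N as [|[|q]].
    + simpl. lra.
    + unfold c3. simpl INR. field_simplify; lra.
    + simpl in HN. lia.
  - set (T := Rabs t). assert (HT : 0 < T) by (apply Rabs_pos_lt; auto).
    assert (Ht2 : t ^ 2 = T ^ 2) by (unfold T; rewrite <- (Rsqr_pow2 (Rabs t)), <- Rsqr_abs, Rsqr_pow2; reflexivity).
    destruct N as [|n].
    + unfold P. simpl prodC. rewrite Cmod_1. simpl INR.
      replace (0 * beta / (2 * T)) with 0 by (field; lra).
      unfold W. replace (4 * 0 ^ 2 + 1) with 1 by ring. rewrite ln_1.
      replace (- (1 / (2 * beta)) * t ^ 2 * (0 - 0 * atan (2 * 0))) with 0 by ring.
      replace (2 * c3 0 beta * 0) with 0 by ring. rewrite exp_0. lra.
    + replace (S n - 1)%nat with n in Ht by lia.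
      set (h := beta / 2).
      assert (Hh : 0 < h) by (unfold h; lra).
      set (inner := fun j : nat => sumR (Z.to_nat (floorR (INR j * beta / 2)))
                        (fun k => psi T (1 + INR j * beta / 2 - INR k))).
      assert (SA : Cmod (P (S n) beta t) ^ 2 <= exp (sumR n inner)).
      { unfold P. replace (S n - 1)%nat with n by lia.
        apply prod_bound. intros j Hj. unfold inner.
        apply prod_bound. intros k Hk.
        assert (Hs : 0 <= INR j * beta / 2).
        { assert (0 <= INR j) by apply pos_INR. nra. }
        destruct (floor_facts _ Hs) as [f1 f2].
        assert (INR k <= INR (Z.to_nat (floorR (INR j * beta / 2)))) by (apply le_INR; lia).
        rewrite factor_eq by lra. apply exp_ineq1_le. }
      assert (SB : sumR n inner <= sumR n (fun j => Psi1 T (INR j * h) + 1 + 4 * (INR j * h) / T)).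
      { apply sumR_le. intros j Hj. unfold inner.
        assert (Hs : 0 <= INR j * beta / 2).
        { assert (0 <= INR j) by apply pos_INR. nra. }
        replace (INR j * h) with (INR j * beta / 2) by (unfold h; field).
        apply inner_bound; auto. }
      rewrite L2b in SB by exact HT.
      assert (C1 := L2a T h n HT Hh).
      set (S1 := sumR n (fun j => Psi1 T (INR j * h))) in *.
      assert (C2 := Psi2_step T (INR n * h + h/2) ((INR n + 1) * h) HT).
      assert (C3 := Psi2_step T 0 (h/2) HT).
      rewrite Psi2_0 in C3.
      assert (Hn0 : 0 <= INR n) by apply pos_INR.
      specialize (C2 ltac:(split; nra)). specialize (C3 ltac:(split; lra)).
      replace ((INR n + 1) * h - (INR n * h + h / 2)) with (h/2) in C2 by field.
      replace (h/2 - 0) with (h/2) in C3 by field.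
      assert (C4 : 2 * h * INR n * (INR n + 1) / T <= 2 * (INR n + 1)).
      { apply div_le; auto. unfold h. change (Rabs t) with T in Ht. assert (0 <= (INR n + 1) * (T - INR n * beta / 2)) by (apply Rmult_le_pos; lra). nra. }
      set (w := W (INR (S n) * beta / (2 * T))).
      assert (HP2 : Psi2 T ((INR n + 1) * h) = -(T^2/4) * w).
      { unfold Psi2, w. rewrite S_INR. f_equal. f_equal. unfold h. field. lra. }
      rewrite HP2 in C2.
      assert (HS1 : S1 <= -(T^2/(2*beta))*w + ((2*INR n+1)*beta/4 + beta/8)).
      { apply Rmult_le_reg_l with h; auto.
        replace (h * (-(T^2/(2*beta))*w + ((2*INR n+1)*beta/4 + beta/8)))
          with (-(T^2/4)*w + h * ((2*INR n+1)*beta/4 + beta/8)) by (unfold h; field; lra).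
        unfold h in *. nra. }
      eapply Rle_trans; [exact SA|].
      rewrite <- exp_plus. apply exp_le_exp.
      rewrite Ht2. unfold c3. rewrite S_INR in *.
      replace (- (1 / (2 * beta)) * T ^ 2 * w) with (-(T^2/(2*beta))*w) by (field; lra).
      replace (2 * ((beta / 8 - 1) / (2 * (INR n + 1)) + 3 / 8 * beta + 3 / 2) * (INR n + 1))
        with (beta/8 - 1 + 3/4*beta*(INR n + 1) + 3*(INR n + 1)) by (field; lra).
      nra.
Qed.
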